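(* Let $(G,S)$ and $(H,S)$ be two compatible $d$-labeled boundaried graphs such that $\mathbf{Aux}(G,S)\oplus\mathbf{Aux}(H,S)$ has no cycles. If $F$ is an $S$-block of $(G,S)\oplus(H,S)$, then $\mathbf{Aux}(F\cap G,S\cap V(F))\oplus\mathbf{Aux}(F\cap H,S\cap V(F))$ has no cycles.
   Context: A block of a graph is a maximal connected subgraph without a cut vertex. A block $d$-labeling of a graph whose blocks have at most $d$ vertices is a map $V(G)\to[d]$ injective on each block; a $d$-labeled boundaried graph is a pair $(G,S)$ with $S\subseteq V(G)$ and $G$ carrying such a labeling. $(G,S)$ and $(H,S)$ are compatible if $V(G-S)\cap V(H-S)=\emptyset$, $G[S]=H[S]$, and labels agree on $S$. The sum $(G,S)\oplus(H,S)$ is the graph obtained from the disjoint union of $G$ and $H$ by identifying corresponding vertices of $S$ and removing duplicate edges inside $S$. An $S$-block of a graph containing $S$ is a block of it containing an edge of $G[S]$. For graphs $G_1,G_2$, $G_1\cap G_2$ is the graph with vertex set $V(G_1)\cap V(G_2)$ and edge set $E(G_1)\cap E(G_2)$. For a boundaried graph $(G,S)$, $\mathbf{Aux}(G,S)$ is the bipartite graph whose vertices are the connected components of $G$ and the connected components of $G[S]$, a component $C_1$ of $G$ adjacent to a component $C_2$ of $G[S]$ iff $C_2\subseteq C_1$; for two boundaried graphs with the same boundary graph, $\mathbf{Aux}(G,S)\oplus\mathbf{Aux}(H,S)$ is the disjoint union of $\mathbf{Aux}(G,S)$ and $\mathbf{Aux}(H,S)$ with the vertices corresponding to the same component of the boundary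 graph identified. *)

(* Defs.v *)
From mathcomp Require Import all_boot.
Set Implicit Arguments. Unset Strict Implicit. Unset Printing Implicit Defensive.

Section Graphs.
Variable T : finType.

Record graph := Graph { gV : {set T}; gE : {set {set T}} }.

Definition wf_graph (G : graph) :=
  forall e, e \in gE G -> #|e| = 2 /\ e \subset gV G.

Definition adjin (G : graph) : rel T :=
  fun x y => [&& x != y, [set x; y] \in gE G, x \in gV G & y \in gV G].

Definition induced (G : graph) (S : {set T}) : graph :=
  Graph S [set e in gE G | e \subset S].

Definition gcap (G1 G2 : graph) : graph :=
  Graph (gV G1 :&: gV G2) (gE G1 :&: gE G2).

(* (G,S) ⊕ (H,S) for compatible boundaried graphs living on the common
   universe T (vertices of S are shared, the others are disjoint), so that
   identifying S and removing duplicate edges is just the union. *)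
Definition gsum (G H : graph) : graph :=
  Graph (gV G :|: gV H) (gE G :|: gE H).

Definition subgraph (F G : graph) :=
  wf_graph F /\ gV F \subset gV G /\ gE F \subset gE G.

Definition gdel (G : graph) (v : T) : graph :=
  Graph (gV G :\ v) [set e in gE G | v \notin e].

(* connected (the empty graph is vacuously connected here) *)
Definition gconnected (G : graph) :=
  forall x y, x \in gV G -> y \in gV G -> connect (adjin G) x y.

Definition conn_nocut (F : graph) :=
  [/\ wf_graph F, gV F != set0, gconnected F &
      forall v, v \in gV F -> gconnected (gdel F v)].

Definition is_block (F G : graph) :=
  [/\ subgraph F G, conn_nocut F &
      forall F', subgraph F' G -> conn_nocut F' ->
        gV F \subset gV F' -> gE F \subset gE F' -> F' = F].

Definition is_S_block (S : {set T}) (F G : graph) :=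
  is_block F G /\ exists2 e, e \in gE (induced G S) & e \in gE F.

Definition block_labeling (d : nat) (G : graph) (l : T -> 'I_d) :=
  forall B, is_block B G -> {in gV B &, injective l}.

Definition comps (G : graph) : {set {set T}} :=
  [set [set y | connect (adjin G) x y] | x in gV G].

(* Aux(G,S) ⊕ Aux(H,S): vertices are (C, Some true) for components C of G,
   (C, Some false) for components of H and (D, None) for components of the
   common boundary graph G[S] = H[S]. *)
Definition auxV (G H : graph) (S : {set T}) : {set ({set T} * option bool)} :=
  [set (C, Some true) | C in comps G] :|: [set (C, Some false) | C in comps H]
  :|: [set (D, None) | D in comps (induced G S)].

Definition aux_adj (u v : {set T} * option bool) : bool :=
  match u.2, v.2 with
  | Some _, None => v.1 \subset u.1
  | None, Some _ => u.1 \subset v.1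
  | _, _ => false
  end.

Definition acyclic (U : finType) (V : {set U}) (r : rel U) :=
  ~ exists s : seq U, [/\ uniq s, 2 < size s, {subset s <= V} & cycle r s].

Definition aux_sum_acyclic (G H : graph) (S : {set T}) :=
  acyclic (auxV G H S) aux_adj.

End Graphs.

(* Main.v *)
Require Import Defs.
From mathcomp Require Import all_boot.
Set Implicit Arguments. Unset Strict Implicit. Unset Printing Implicit Defensive.

Section Proof.
Variable T : finType.
Implicit Types (G H W F K : graph T) (X Z Y : {set T}).

Lemma adjin_sym G : symmetric (adjin G).
Proof.
move=> x y; rewrite /adjin eq_sym setUC.
by case: (x \in gV G); case: (y \in gV G); rewrite ?andbT ?andbF.
Qed.

Lemma csym G x y : connect (adjin G) x y = connect (adjin G) y x.
Proof. exact: (sym_connect_sym (adjin_sym G)). Qed.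

Lemma adjin_mem G x y : adjin G x y -> x \in gV G /\ y \in gV G.
Proof. by case/and4P. Qed.

Lemma path_adjin_mem G x p : path (adjin G) x p -> all (mem (gV G)) p.
Proof. by elim: p x => //= y p IH x /andP[/adjin_mem[_ ->] /IH]. Qed.

Lemma connect_mem G x y : x \in gV G -> connect (adjin G) x y -> y \in gV G.
Proof.
move=> xV /connectP[p pP ->]; have:= mem_last x p.
rewrite inE => /orP[/eqP->//|]; exact: (allP (path_adjin_mem pP)).
Qed.

Lemma connect_mono (r r' : rel T) x y : subrel r r' -> connect r x y -> connect r' x y.
Proof. by move=> h; apply: connect_sub => a b /h /connect1. Qed.

Lemma hub_conn (r : rel T) (V A : {set T}) : symmetric r ->
  {in A &, forall a b, connect r a b} ->
  {in V, forall x, exists2 a, a \in A & connect r x a} ->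
  {in V &, forall x y, connect r x y}.
Proof.
move=> rs hA hV x y xV yV.
case: (hV x xV) => a aA xa; case: (hV y yV) => b bA yb.
apply: connect_trans xa _; apply: connect_trans (hA a b aA bA) _.
by rewrite (sym_connect_sym rs).
Qed.

Lemma adjin_induced F' W Y u v : gE F' \subset gE W -> gV F' \subset Y ->
  adjin F' u v -> adjin (induced W Y) u v.
Proof.
move=> sE sV /and4P[uv e uF vF]; have uY := subsetP sV _ uF; have vY := subsetP sV _ vF.
by rewrite /adjin /= uv uY vY inE (subsetP sE _ e) /= subUset !sub1set uY vY.
Qed.

Lemma adjin_induced2 W Y a b : a \in Y -> b \in Y -> adjin W a b -> adjin (induced W Y) a b.
Proof.
move=> aY bY /and4P[ab e _ _].
by rewrite /adjin /= ab aY bY inE e subUset !sub1set aY bY.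
Qed.

Lemma gdel_induced W X v x y :
  adjin (gdel (induced W X) v) x y = adjin (induced W (X :\ v)) x y.
Proof.
rewrite /adjin /=.
case: (x =P y) => //= _.
case xv: (x \in X :\ v); case yv: (y \in X :\ v); rewrite /= ?andbF ?andbT //.
move: xv yv; rewrite !inE => /andP[xv xX] /andP[yv yX].
rewrite (eq_sym v x) (eq_sym v y) (negbTE xv) (negbTE yv) !subUset !sub1set !inE.
by rewrite xv yv xX yX /= !andbT.
Qed.

Definition reach W F X := forall Z : {set T},
  (forall z z', z \in Z -> z' \in Z -> z = z') ->
  {in X :\: Z, forall x, exists2 a, a \in gV F :\: Z &
     connect (adjin (induced W (X :\: Z))) x a}.

Lemma induced_cnc W F X : wf_graph W -> subgraph F W -> conn_nocut F ->
  gV F \subset X -> X \subset gV W -> reach W F X ->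
  [/\ subgraph (induced W X) W, conn_nocut (induced W X),
      gV F \subset gV (induced W X) & gE F \subset gE (induced W X)].
Proof.
move=> wfW [wfF [sVF sEF]] [_ nF cF cdF] sFX sXW hR.
have key : forall Z, (forall z z', z \in Z -> z' \in Z -> z = z') ->
   {in gV F :\: Z &, forall a b, connect (adjin (induced W (X :\: Z))) a b} ->
   gconnected (induced W (X :\: Z)).
  move=> Z Zu hA x y xV yV.
  exact: (hub_conn (adjin_sym _) hA (hR Z Zu) xV yV).
have sE : gE F \subset gE (induced W X).
  apply/subsetP => e eF; rewrite inE (subsetP sEF _ eF) /=.
  by case: (wfF e eF) => _ h; apply: subset_trans h sFX.
split => //.
- split; last by split=> //; apply/subsetP => e; rewrite inE => /andP[].
  move=> e; rewrite inE => /andP[eW eX]; split=> //; by case: (wfW e eW).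
- split.
  + move=> e; rewrite inE => /andP[eW eX]; split=> //; by case: (wfW e eW).
  + apply: contraNneq nF => /= X0; apply/eqP; apply/setP => x; rewrite inE.
    apply/negbTE; apply/negP => xF; move: (subsetP sFX _ xF); by rewrite X0 inE.
  + suff: gconnected (induced W (X :\: set0)) by rewrite setD0.
    apply: key.
      by move=> z z'; rewrite inE.
    move=> a b; rewrite setD0 => aF bF.
    apply: connect_mono (cF a b aF bF) => u v.
    apply: adjin_induced; first exact: sEF.
    by rewrite setD0.
  + move=> v vX x y xV yV.
    rewrite (eq_connect (@gdel_induced W X v)).
    apply: (key [set v]) => //.
      by move=> z z'; rewrite !inE => /eqP-> /eqP->.
    move=> a b aF bF.
    case vF: (v \in gV F).
      have := cdF v vF a b aF bF; apply: connect_mono => p q.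
      apply: adjin_induced.
        by apply: subset_trans sEF; apply/subsetP => e; rewrite inE => /andP[].
      by apply: setSD.
    move: aF bF; rewrite !inE => /andP[_ aF] /andP[_ bF].
    apply: connect_mono (cF a b aF bF) => p q.
    apply: adjin_induced; first exact: sEF.
    apply/subsetP => z zF; rewrite !inE (subsetP sFX _ zF) andbT.
    by apply: contraTneq zF => ->; rewrite vF.
Qed.

Lemma block_induced W F X : wf_graph W -> is_block F W ->
  gV F \subset X -> X \subset gV W -> reach W F X -> induced W X = F.
Proof.
move=> wfW [sF cF mF] sFX sXW hR.
case: (induced_cnc wfW sF cF sFX sXW hR) => s c a b.
exact: mF.
Qed.

Lemma F_induced W F : wf_graph W -> is_block F W -> induced W (gV F) = F.
Proof.
move=> wfW bF; apply: block_induced => //.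
  by case: bF => [[_ [h _]] _ _].
move=> Z _ x xF; exists x => //; exact: connect0.
Qed.


Lemma no_ear W F u w I : wf_graph W -> is_block F W -> u \in gV F -> w \in gV F ->
  path (adjin W) u (rcons I w) -> uniq (u :: rcons I w) -> I != [::] ->
  all (predC (mem (gV F))) I -> False.
Proof.
move=> wfW bF uF wF pW uq In0 IF.
have sFW : gV F \subset gV W by case: bF => [[_ [h _]] _ _].
pose X := gV F :|: [set x in I].
have sFX : gV F \subset X by apply: subsetUl.
have sXW : X \subset gV W.
  apply/subsetP => x; rewrite !inE => /orP[/(subsetP sFW)//|xI].
  by apply: (allP (path_adjin_mem pW)); rewrite mem_rcons inE xI orbT.
have hR : reach W F X.
  move=> Z Zu x; rewrite in_setD => /andP[xZ xX].
  case xF: (x \in gV F).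
    by exists x; [rewrite in_setD xZ xF | exact: connect0].
  have xI : x \in I by move: xX; rewrite !inE xF.
  have inX : forall y, y \in I -> y \in X by move=> y yI; rewrite !inE yI orbT.
  have sub : {in X :\: Z &, subrel (adjin W) (adjin (induced W (X :\: Z)))}.
    by move=> a b aX bX; apply: adjin_induced2.
  case/splitPr: xI inX pW uq IF => I1 I2 inX.
  rewrite rcons_cat rcons_cons cat_path => /andP[pu px].
  rewrite -cat_cons cat_uniq => /and3P[_ hn _] IF.
  case hZ: (has (mem Z) (x :: rcons I2 w)).
    case/hasP: hZ => z zt zZ.
    have nZ : forall y, y \in u :: I1 -> y \notin Z.
      move=> y yu; apply/negP => yZ; move: hn; rewrite (Zu _ _ yZ zZ) in yu.
      by move/hasPn/(_ z zt); rewrite yu.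
    exists u.
      by rewrite in_setD nZ ?mem_head // uF.
    rewrite csym.
    have pu' : path (adjin W) u (rcons I1 x).
      by rewrite rcons_path pu; case/andP: px.
    have pu2 := sub_in_path sub _ pu'.
    apply: (path_connect (pu2 _)); last by rewrite in_cons mem_rcons mem_head orbT.
    apply/allP => y; move=> yin; change (y \in X :\: Z); move: yin.
    rewrite in_cons mem_rcons in_cons => /or3P[/eqP->|/eqP->|yI1].
    - by rewrite in_setD nZ ?mem_head // (subsetP sFX).
    - by rewrite in_setD xZ xX.
    - by rewrite in_setD nZ ?in_cons ?yI1 ?orbT // inX // mem_cat yI1.
  move/negbT/hasPn: hZ => hZ.
  exists w.
    by rewrite in_setD wF andbT; apply: hZ; rewrite in_cons mem_rcons mem_head orbT.
  case/andP: px => _ px.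
  have pw := sub_in_path sub _ px.
  apply: (path_connect (pw _)); last by rewrite in_cons mem_rcons mem_head orbT.
  apply/allP => y yt; change (y \in X :\: Z); rewrite in_setD hZ //=.
  move: yt; rewrite in_cons mem_rcons in_cons => /or3P[/eqP->|/eqP->|yI2] //.
    exact: (subsetP sFX).
  by rewrite inX // mem_cat in_cons yI2 !orbT.
have e := block_induced wfW bF sFX sXW hR.
have eV : gV F :|: [set x in I] = gV F by exact: (congr1 (@gV T) e).
have [i iI] : exists i, i \in I by case: (I) In0 => // i ? _; exists i; rewrite mem_head.
by have := allP IF i iI; rewrite /= -eV !inE iI orbT.
Qed.

Lemma split_first (P : pred T) p : has P p ->
  exists I, exists w, exists p', [/\ p = I ++ w :: p', all (predC P) I & P w].
Proof.
elim: p => //= y p IH; case Py: (P y) => /= h.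
  by exists [::], y, p.
case: (IH h) => I [w [p' [-> aI Pw]]].
by exists (y :: I), w, p'; rewrite /= Py aI.
Qed.

Lemma keyF W F K : wf_graph W -> is_block F W -> gE K \subset gE W -> gV K \subset gV W ->
  forall n u p, size p <= n -> u \in gV F -> path (adjin K) u p -> uniq (u :: p) ->
  last u p \in gV F -> connect (adjin (gcap F K)) u (last u p).
Proof.
move=> wfW bF sE sV.
have Find := F_induced wfW bF.
have adjKW : subrel (adjin K) (adjin W).
  move=> a b /and4P[ab e aK bK].
  by rewrite /adjin ab (subsetP sE _ e) (subsetP sV _ aK) (subsetP sV _ bK).
elim=> [|n IH] u p.
  by rewrite leqn0 => /nilP -> /= *; exact: connect0.
case: p => [|q p0]; first by move=> *; exact: connect0.
move=> sp uF pK up lF.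
have : has (mem (gV F)) (q :: p0).
  by apply/hasP; exists (last u (q :: p0)) => //=; apply: mem_last.
case/split_first => I [w [p' [ep aI wF0]]].
have wF : w \in gV F := wF0.
rewrite ep in sp pK up lF *.
case: I ep aI sp pK up lF => [|i I] ep aI sp pK up lF.
  rewrite /= in sp pK up lF *.
  case/andP: pK => uw pK.
  have uwG : adjin (gcap F K) u w.
    case/and4P: uw => nuw e uK wK.
    rewrite /adjin /= nuw !inE uF wF uK wK e !andbT /=.
    rewrite -Find inE (subsetP sE _ e) /= subUset !sub1set uF wF //.
  apply: connect_trans (connect1 uwG) _.
  apply: IH => //.
  by case/andP: up.
exfalso.
apply: (no_ear wfW bF uF wF (I := i :: I)) => //.
- move: pK; rewrite cat_path => /andP[p1 /= /andP[p2 _]].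
  have : path (adjin K) u (rcons (i :: I) w) by rewrite rcons_path p1 p2.
  by move/(sub_path adjKW).
- move: up; rewrite -cat_cons -cat_rcons cat_uniq => /andP[h _]; exact: h.
Qed.

Lemma keyC W F K u v : wf_graph W -> is_block F W -> gE K \subset gE W ->
  gV K \subset gV W -> u \in gV F -> v \in gV F ->
  connect (adjin K) u v -> connect (adjin (gcap F K)) u v.
Proof.
move=> wfW bF sE sV uF vF /connectP[p pK ev]; move: vF; rewrite ev.
case/shortenP: pK => p' pK' up' _ lF.
exact: (keyF wfW bF sE sV (leqnn _)).
Qed.


Definition Kof G H S (b : option bool) :=
  match b with Some true => G | Some false => H | None => induced G S end.
Definition compof G x := [set y | connect (adjin G) x y].
Definition hull G H S (u : {set T} * option bool) :=
  ((if [pick x in u.1] is Some r then compof (Kof G H S u.2) r else u.1), u.2).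

Lemma auxV_K G H S u : u \in auxV G H S -> u.1 \in comps (Kof G H S u.2).
Proof. by rewrite /auxV !inE => /orP[/orP[]|] /imsetP[C CC ->]. Qed.

Lemma K_auxV G H S u : u.1 \in comps (Kof G H S u.2) -> u \in auxV G H S.
Proof.
case: u => C [[]|] /= h; rewrite /auxV !inE; apply/orP;
  [left; apply/orP; left | left; apply/orP; right | right]; apply/imsetP; by exists C.
Qed.

Lemma comp_rep G C r : C \in comps G -> r \in C -> C = compof G r /\ r \in gV G.
Proof.
case/imsetP => x xV ->; rewrite inE => xr; split; last exact: connect_mem xr.
apply/setP => y; rewrite !inE; apply/idP/idP => h.
  by apply: connect_trans h; rewrite csym.
exact: connect_trans xr h.
Qed.

Lemma comp_pick G C : C \in comps G -> exists2 r, [pick x in C] = Some r & r \in C.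
Proof.
move=> CC; case: pickP => [r rC|h]; first by exists r.
by case/imsetP: CC h => x xV -> /(_ x); rewrite inE connect0.
Qed.

Lemma adjin_sub (A B : graph T) : gE A \subset gE B -> gV A \subset gV B -> subrel (adjin A) (adjin B).
Proof.
move=> sE sV a b /and4P[ab e aA bA].
by rewrite /adjin ab (subsetP sE _ e) (subsetP sV _ aA) (subsetP sV _ bA).
Qed.

Lemma compof_eq G r r' : connect (adjin G) r r' -> compof G r = compof G r'.
Proof.
move=> h; apply/setP => y; rewrite !inE; apply/idP/idP => h'.
  by apply: connect_trans h'; rewrite csym.
exact: connect_trans h h'.
Qed.

End Proof.

Theorem lemma3p6 (T : finType) (d : nat) (G H : graph T) (S : {set T})
    (lG lH : T -> 'I_d) :
  wf_graph G -> wf_graph H ->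
  S \subset gV G -> S \subset gV H ->
  block_labeling G lG -> block_labeling H lH ->
  (* compatibility *)
  [disjoint gV G :\: S & gV H :\: S] ->
  induced G S = induced H S ->
  {in S, lG =1 lH} ->
  aux_sum_acyclic G H S ->
  forall F : graph T, is_S_block S F (gsum G H) ->
  aux_sum_acyclic (gcap F G) (gcap F H) (S :&: gV F).
Proof.
move=> wfG wfH SG SH _ _ _ eGH _ acyc F [bF _].
pose W := gsum G H.
have wfW : wf_graph W.
  move=> e; rewrite inE => /orP[/wfG|/wfH] [c s]; split=> //.
    by apply: subset_trans s _; exact: subsetUl.
  by apply: subset_trans s _; exact: subsetUr.
have wfF : wf_graph F by case: bF => [[h _] _ _].
pose S' := S :&: gV F.
pose Gs := gcap F G. pose Hs := gcap F H.
have hF : forall b, gE (Kof G H S b) \subset gE W /\ gV (Kof G H S b) \subset gV W.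
  case=> [[]|] /=; split; try exact: subsetUl; try exact: subsetUr.
    by apply/subsetP => e; rewrite inE => /andP[eG _]; rewrite inE eG.
  by apply: subset_trans SG _; exact: subsetUl.
have P1 : forall b r, r \in gV (Kof Gs Hs S' b) -> r \in gV F /\ r \in gV (Kof G H S b).
  by case=> [[]|] r /=; rewrite !inE => /andP[].
have P2 : forall b, subrel (adjin (gcap F (Kof G H S b))) (adjin (Kof Gs Hs S' b)).
  case=> [[]|] //=; apply: adjin_sub => /=.
    apply/subsetP => e; rewrite !inE => /andP[eF /andP[eG eS]].
    by rewrite eF eG subsetI eS; case: (wfF e eF).
  by rewrite setIC.
have P3 : forall b, subrel (adjin (Kof Gs Hs S' b)) (adjin (Kof G H S b)).
  case=> [[]|] /=; apply: adjin_sub => /=; try exact: subsetIr.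
    by apply/subsetP => e; rewrite !inE => /andP[/andP[_ ->] /subset_trans->] //; exact: subsetIl.
  exact: subsetIl.
have P4 : forall b, subrel (adjin (induced G S)) (adjin (Kof G H S (Some b))).
  case=> /=; [|rewrite eGH]; apply: adjin_sub => //=; apply/subsetP => e; by rewrite inE => /andP[].
set phi := hull G H S.
have info : forall u, u \in auxV Gs Hs S' -> exists r,
    [/\ phi u = (compof (Kof G H S u.2) r, u.2), u.1 = compof (Kof Gs Hs S' u.2) r,
        r \in gV F & r \in gV (Kof G H S u.2)].
  move=> u /auxV_K uC; case: (comp_pick uC) => r pr ru; case: (comp_rep uC ru) => e rK.
  by exists r; rewrite /phi /hull pr; case: (P1 _ _ rK).
have inj : {in auxV Gs Hs S' &, injective phi}.
  move=> u v uV vV.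
  case: (info u uV) => r [-> eu rF rK]; case: (info v vV) => r' [-> ev rF' rK'].
  case=> ec e2; rewrite -e2 in ev rK' ec.
  have h : connect (adjin (Kof G H S u.2)) r r'.
    have : r' \in compof (Kof G H S u.2) r' by rewrite inE connect0.
    by rewrite -ec inE.
  have hh := connect_mono (P2 u.2) (keyC wfW bF (hF _).1 (hF _).2 rF rF' h).
  move: eu ev e2 hh; case: u {uV rK rK' ec h} => a b; case: v {vV} => a' b' /= -> -> -> hh.
  by rewrite (compof_eq hh).
have sub_case : forall u v b0, u \in auxV Gs Hs S' -> v \in auxV Gs Hs S' ->
    u.2 = Some b0 -> v.2 = None -> v.1 \subset u.1 -> (phi v).1 \subset (phi u).1.
  move=> u v b0 uV vV e1 e2 svu.
  case: (info u uV) => r [-> eu rF rK]; case: (info v vV) => r' [-> ev rF' rK'].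
  rewrite e1 e2 /= in eu ev rK rK' *.
  have h : connect (adjin (Kof G H S (Some b0))) r r'.
    apply: connect_mono (P3 _) _.
    by have := subsetP svu r'; rewrite eu ev !inE connect0 => /(_ isT).
  apply/subsetP => y; rewrite !inE => h'.
  exact: connect_trans h (connect_mono (P4 b0) h').
move=> [s [us ss sV cs]]; apply: acyc; exists (map phi s); split.
- by rewrite map_inj_in_uniq // => u v uS vS; apply: inj; apply: sV.
- by rewrite size_map.
- move=> y /mapP[u uS ->]; case: (info u (sV u uS)) => r [-> _ _ rK].
  by apply: K_auxV => /=; apply/imsetP; exists r.
- apply: (homo_cycle_in (P := mem (auxV Gs Hs S'))) cs; last by apply/allP.
  have e2phi : forall u, (phi u).2 = u.2 by [].
  move=> u v uV vV; rewrite /aux_adj !e2phi.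
  case e1: (u.2) => [b0|]; case e2: (v.2) => [b1|] //.
    exact: (sub_case u v b0).
  exact: (sub_case v u b1).
Qed.
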